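(* Let $G^\sigma$ be a connected oriented graph of order $n\in\{2,3,4\}$ with $sr(G^\sigma)=2$. Then: (1) if $n=2$, $G^\sigma$ is the path $P_2^\sigma$ with arbitrary orientation; (2) if $n=3$, the underlying graph is $K_3$ or $P_3$ (with any orientation of the edges); (3) if $n=4$, $G^\sigma$ is one of: (a) an evenly-oriented cycle $C_4^\sigma$; (b) an orientation (arbitrary) of the star $K_{1,3}$; (c) an evenly-oriented orientation of $K_{1,1,2}$ (i.e. an orientation of $K_4$ minus an edge in which every cycle of length $4$ is evenly-oriented).
   Context: An oriented graph $G^\sigma$ is a simple graph $G$ (underlying graph) together with an orientation of each edge. Its skew-adjacency matrix $S(G^\sigma)=(s_{ij})$ has $s_{ij}=1$ if there is an arc from $v_i$ to $v_j$, $s_{ij}=-1$ if there is an arc from $v_j$ to $v_i$, and $0$ otherwise; the skew-rank $sr(G^\sigma)$ is the rank of $S(G^\sigma)$. For an even cycle $u_1\cdots u_ku_1$, its sign is the sign of $\prod_{i=1}^k s_{u_iu_{i+1}}$ ($u_{k+1}=u_1$); the cycle is evenly-oriented if this sign is positive. An oriented graph is evenly-oriented if every even cycle in it is evenly-oriented. $P_n$, $C_n$, $K_n$ denote path, cycle, complete graph on $n$ vertices; $K_{1,1,2}$ is the complete tripartite graph with parts of sizes $1,1,2$. *)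

(* Defs.v *)
From HB Require Import structures.
From mathcomp Require Import all_boot all_order all_algebra.
Set Implicit Arguments. Unset Strict Implicit. Unset Printing Implicit Defensive.
Import Order.TTheory GRing.Theory Num.Theory.
Local Open Scope ring_scope.

(* An oriented graph on vertex set 'I_n is given by its arc relation
   [arc i j] = "there is an arc from v_i to v_j"; it must be irreflexive
   and antisymmetric (at most one orientation per edge). *)
Definition oriented (n : nat) (arc : rel 'I_n) : Prop :=
  (forall i, ~~ arc i i) /\ (forall i j, ~~ (arc i j && arc j i)).

Definition und (n : nat) (arc : rel 'I_n) : rel 'I_n :=
  fun i j => arc i j || arc j i.

Definition skew_adj (n : nat) (arc : rel 'I_n) : 'M[rat]_n :=
  \matrix_(i, j) (if arc i j then 1 else if arc j i then -1 else 0).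

Definition skew_rank (n : nat) (arc : rel 'I_n) : nat := \rank (skew_adj arc).

Definition connected_og (n : nat) (arc : rel 'I_n) : Prop :=
  forall i j, connect (und arc) i j.

Definition cycle_edges (n : nat) (u : seq 'I_n) := zip u (rot 1 u).

Definition is_cycle (n : nat) (arc : rel 'I_n) (u : seq 'I_n) : bool :=
  [&& uniq u, 3 <= size u & all (fun p => und arc p.1 p.2) (cycle_edges u)]%N.

Definition cycle_prod (n : nat) (arc : rel 'I_n) (u : seq 'I_n) : rat :=
  \prod_(p <- cycle_edges u) skew_adj arc p.1 p.2.

Definition evenly_oriented (n : nat) (arc : rel 'I_n) : Prop :=
  forall u : seq 'I_n, is_cycle arc u -> ~~ odd (size u) -> 0 < cycle_prod arc u.

Definition und_iso (n : nat) (arc : rel 'I_n) (H : rel 'I_n) : Prop :=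
  exists f : 'I_n -> 'I_n, bijective f /\ forall i j, H i j = und arc (f i) (f j).

Definition path_g (n : nat) : rel 'I_n :=
  fun i j => (i.+1 == j :> nat) || (j.+1 == i :> nat).
Definition cycle_g (n : nat) : rel 'I_n :=
  fun i j => path_g i j || ((i == 0 :> nat) && (j == n.-1 :> nat))
                        || ((j == 0 :> nat) && (i == n.-1 :> nat)).
Definition complete_g (n : nat) : rel 'I_n := fun i j => i != j.
Definition star_g (n : nat) : rel 'I_n :=
  fun i j => (i != j) && ((i == 0 :> nat) || (j == 0 :> nat)).
(* K_{1,1,2} on 'I_4: parts {0}, {1}, {2,3}; i.e. K_4 minus the edge {2,3} *)
Definition k112_g (n : nat) : rel 'I_n :=
  fun i j => (i != j) && ~~ (((i == 2 :> nat) && (j == 3 :> nat))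
                             || ((i == 3 :> nat) && (j == 2 :> nat))).

(* Main.v *)
Require Import Defs.
From mathcomp Require Import all_boot all_order all_algebra.
From mathcomp Require Import ring.
From Stdlib Require Import FunctionalExtensionality.
Import GRing.Theory Num.Theory.
Set Implicit Arguments. Unset Strict Implicit. Unset Printing Implicit Defensive.

Section Det.
Local Open Scope ring_scope.

Definition D3 (R : comNzRingType) (f : nat -> nat -> R) :=
  f 0%N 0%N * (f 1%N 1%N * f 2%N 2%N - f 1%N 2%N * f 2%N 1%N)
 - f 0%N 1%N * (f 1%N 0%N * f 2%N 2%N - f 1%N 2%N * f 2%N 0%N)
 + f 0%N 2%N * (f 1%N 0%N * f 2%N 1%N - f 1%N 1%N * f 2%N 0%N).

Lemma det3 (R : comNzRingType) (A : 'M[R]_3) (f : nat -> nat -> R) :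
  (forall i j : 'I_3, A i j = f i j) -> \det A = D3 f.
Proof.
move=> E.
rewrite (expand_det_row A ord0) !big_ord_recr big_ord0 /= /cofactor.
rewrite !(expand_det_row _ ord0) !big_ord_recr !big_ord0 /= /cofactor !det_mx11 !mxE /=.
rewrite /D3 !E /= /bump /= ?(addn0, add0n, addn1, add1n, addnS, addSn) /=.
rewrite ?(expr0, expr1, exprS) ?(mul1r, mulN1r).
ring.
Qed.

Lemma det3i (R : comNzRingType) (A : 'M[R]_3) :
  \det A = D3 (fun i j => A (inord i) (inord j)).
Proof. by apply: det3 => i j; rewrite !inord_val. Qed.

Definition D4 (R : comNzRingType) (f : nat -> nat -> R) :=
  f 0%N 0%N * D3 (fun i k => f i.+1 (bump 0 k))
 - f 0%N 1%N * D3 (fun i k => f i.+1 (bump 1 k))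
 + f 0%N 2%N * D3 (fun i k => f i.+1 (bump 2 k))
 - f 0%N 3%N * D3 (fun i k => f i.+1 (bump 3 k)).

Lemma det4 (R : comNzRingType) (A : 'M[R]_4) (f : nat -> nat -> R) :
  (forall i j : 'I_4, A i j = f i j) -> \det A = D4 f.
Proof.
move=> E.
rewrite (expand_det_row A ord0) !big_ord_recr big_ord0 /= /cofactor.
rewrite !det3i.
rewrite /D4 /D3 !mxE !E /= ?inordK // /bump /= ?(addn0, add0n, addn1, add1n, addnS, addSn) /=.
rewrite ?(expr0, expr1, exprS) ?(mul1r, mulN1r).
ring.
Qed.

Lemma skew_D4 (R : comNzRingType) (f : nat -> nat -> R) :
  (forall a b, f b a = - f a b) -> (forall a, f a a = 0) ->
  D4 f = (f 0%N 1%N * f 2%N 3%N - f 0%N 2%N * f 1%N 3%N + f 0%N 3%N * f 1%N 2%N) ^+ 2.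
Proof.
move=> fs fd.
rewrite /D4 /D3 /bump /= ?(addn0, add0n, addn1, add1n, addnS, addSn) /=.
rewrite (fs 0%N 1%N) (fs 0%N 2%N) (fs 0%N 3%N) (fs 1%N 2%N) (fs 1%N 3%N) (fs 2%N 3%N).
rewrite !fd.
ring.
Qed.

End Det.

Definition enc (x y : bool) : nat := if x then 1 else if y then 2 else 0.
Definition pairs (n : nat) : seq (nat * nat) :=
  [seq p <- [seq (i, j) | i <- iota 0 n, j <- iota 0 n] | p.1 < p.2].
Definition arcOfL n (P : seq (nat * nat)) (c : seq nat) : rel 'I_n := fun i j =>
  ((i < j) && (nth 0 c (index (val i, val j) P) == 1))
  || ((j < i) && (nth 0 c (index (val j, val i) P) == 2)).
Definition arcOf n (c : seq nat) : rel 'I_n := @arcOfL n (pairs n) c.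
Definition code_of m (arc : rel 'I_m.+1) : seq nat :=
  [seq enc (arc (inord p.1) (inord p.2)) (arc (inord p.2) (inord p.1)) | p <- pairs m.+1].
Fixpoint codes k : seq (seq nat) :=
  if k is k'.+1 then [seq x :: s | x <- iota 0 3, s <- codes k'] else [:: [::]].

Lemma codesP s : all (fun x => x < 3) s -> s \in codes (size s).
Proof.
elim: s => [|x s IH] //= /andP [hx hs].
by case: x hx => [|[|[|x]]] // _; rewrite !mem_cat (map_f _ (IH hs)) ?orbT.
Qed.

Lemma code_in m (arc : rel 'I_m.+1) : code_of arc \in codes (size (pairs m.+1)).
Proof.
have -> : size (pairs m.+1) = size (code_of arc) by rewrite size_map.
apply: codesP; apply/allP => x /mapP [p _ ->].
by rewrite /enc; case: ifP => //; case: ifP.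
Qed.

Lemma arc_code m (arc : rel 'I_m.+1) : oriented arc -> arc = arcOf (code_of arc).
Proof.
case=> irr anti.
have key : forall i j : 'I_m.+1, i < j ->
    nth 0 (code_of arc) (index (val i, val j) (pairs m.+1)) = enc (arc i j) (arc j i).
  move=> i j hij.
  have Hp : (val i, val j) \in pairs m.+1.
    rewrite mem_filter [_.1]/= [_.2]/= hij andTb.
    by apply: (allpairs_f pair); rewrite mem_iota /=.
  rewrite (nth_map (0, 0)) ?index_mem // nth_index //= !inord_val //.
apply: functional_extensionality => i; apply: functional_extensionality => j.
rewrite /arcOf /arcOfL.
case: (ltngtP i j) => h.
- rewrite key //= orbF /enc. by case: (arc i j) => //; case: (arc j i).
- rewrite (key j i h) /= /enc. have := anti j i. by case: (arc i j); case: (arc j i).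
- have -> : i = j by apply: val_inj.
  by rewrite (negbTE (irr j)).
Qed.

Definition ordn m k : 'I_m.+1 := Ordinal (ltn_pmod k (ltn0Sn m)).
Definition enumO m := map (ordn m) (iota 0 m.+1).

Lemma ordn_val m (x : 'I_m.+1) : ordn m x = x.
Proof. by apply: val_inj; rewrite /= modn_small. Qed.

Lemma mem_enumO m (x : 'I_m.+1) : x \in enumO m.
Proof.
apply/mapP; exists (val x); last by rewrite ordn_val.
by rewrite mem_iota /=.
Qed.

Lemma size_enumO m : size (enumO m) = m.+1.
Proof. by rewrite size_map size_iota. Qed.

(* ---------- lazy quantifiers (for vm_compute) ---------- *)
Fixpoint lall T (a : pred T) (s : seq T) : bool :=
  if s is x :: s' then (if a x then lall a s' else false) else true.
Fixpoint lhas T (a : pred T) (s : seq T) : bool :=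
  if s is x :: s' then (if a x then true else lhas a s') else false.
Lemma lallE T (a : pred T) s : lall a s = all a s.
Proof. by elim: s => //= x s ->; case: (a x). Qed.
Lemma lhasE T (a : pred T) s : lhas a s = has a s.
Proof. by elim: s => //= x s ->; case: (a x). Qed.

Definition isoB m (arc H : rel 'I_m.+1) : bool :=
  lhas (fun p : seq 'I_m.+1 =>
    lall (fun x : 'I_m.+1 => lall (fun y : 'I_m.+1 =>
       if ((nth ord0 p x == nth ord0 p y) ==> (x == y)) then
       (H x y == und arc (nth ord0 p x) (nth ord0 p y)) else false) (enumO m)) (enumO m))
  (permutations (enumO m)).

Lemma isoBP m (arc H : rel 'I_m.+1) : isoB arc H -> und_iso arc H.
Proof.
rewrite /isoB lhasE; case/hasP => p _; rewrite lallE => /allP Hp.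
have Hxy : forall x y : 'I_m.+1, ((nth ord0 p x == nth ord0 p y) ==> (x == y)) &&
       (H x y == und arc (nth ord0 p x) (nth ord0 p y)).
  by move=> x y; have := Hp x (mem_enumO x); rewrite lallE => /allP; apply; apply: mem_enumO.
exists (fun x : 'I_m.+1 => nth ord0 p x); split.
  apply: injF_bij => x y exy.
  by have /andP [/implyP /(_ (introT eqP exy)) /eqP] := Hxy x y.
by move=> i j; have /andP [_ /eqP] := Hxy i j.
Qed.

Definition stepC m (e : rel 'I_m.+1) (S : seq 'I_m.+1) :=
  [seq y <- enumO m | (y \in S) || has (fun x => e x y) S].
Definition compC m (e : rel 'I_m.+1) := iter m.+1 (stepC e) [:: ord0].
Definition checkC m (arc : rel 'I_m.+1) (R : bool) : bool :=
  let e := und arc in let S := compC e in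
  if R then true else [&& ~~ lall (fun y => y \in S) (enumO m), ord0 \in S &
        lall (fun x => lall (fun y => e x y ==> ((x \in S) == (y \in S))) (enumO m)) (enumO m)].

Lemma checkCP m (arc : rel 'I_m.+1) (R : bool) :
  connected_og arc -> checkC arc R -> R.
Proof.
move=> Hc; rewrite /checkC; case: ifP => // _; rewrite !lallE.
case/and3P => [Hn H0 /allP Hcl].
exfalso.
case/allPn: Hn => y _ Hy.
set S := compC (und arc) in Hy H0 Hcl.
have cl : closed (und arc) (mem S).
  move=> x z exz.
  have := Hcl x (mem_enumO x); rewrite lallE => /allP.
  by move=> /(_ z (mem_enumO z)) /implyP /(_ exz) /eqP.
have sym : connect_sym (und arc).
  by apply: sym_connect_sym => x z; rewrite /und orbC.
have := closed_connect cl (Hc ord0 y).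
by rewrite H0 (negbTE Hy).
Qed.

Local Open Scope ring_scope.
Definition sgI n (arc : rel 'I_n) (i j : 'I_n) : int :=
  if arc i j then 1 else if arc j i then -1 else 0.

Definition prodI n (arc : rel 'I_n) (u : seq 'I_n) : int :=
  foldr (fun p acc => sgI arc p.1 p.2 * acc) 1 (cycle_edges u).

Lemma cycle_prodE n (arc : rel 'I_n) u : cycle_prod arc u = (prodI arc u)%:~R.
Proof.
rewrite /cycle_prod /prodI.
elim: (cycle_edges u) => [|p s IH]; first by rewrite big_nil.
rewrite big_cons /= IH mxE intrM; congr (_ * _).
rewrite /sgI; case: (arc p.1 p.2) => //; case: (arc p.2 p.1) => //=.
Qed.

Definition evenB (arc : rel 'I_4) : bool :=
  lall (fun u => if is_cycle arc u then prodI arc u == 1 else true) (permutations (enumO 3)).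

Lemma evenBP (arc : rel 'I_4) : evenB arc -> evenly_oriented arc.
Proof.
rewrite /evenB lallE => /allP H u Hu Hodd.
have /and3P [Hun Hs _] := Hu.
have sub : {subset u <= enumO 3} by move=> x _; apply: mem_enumO.
have Hle := uniq_leq_size Hun sub.
rewrite size_enumO in Hle.
have Hsz : size u = 4%N.
  move: Hs Hle Hodd; case: (size u) => [|[|[|[|[|k]]]]] //.
have Hle2 : (size (enumO 3) <= size u)%N by rewrite size_enumO Hsz.
have [_ Heq] := uniq_min_size Hun sub Hle2.
have Hp : u \in permutations (enumO 3).
  by rewrite mem_permutations; apply: uniq_perm => //; vm_compute.
have := H u Hp; rewrite Hu /= => /eqP E.
by rewrite cycle_prodE E ltr01.
Qed.

Definition pfI (arc : rel 'I_4) : int :=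
  sgI arc (ordn 3 0) (ordn 3 1) * sgI arc (ordn 3 2) (ordn 3 3)
  - sgI arc (ordn 3 0) (ordn 3 2) * sgI arc (ordn 3 1) (ordn 3 3)
  + sgI arc (ordn 3 0) (ordn 3 3) * sgI arc (ordn 3 1) (ordn 3 2).

Lemma pf0 (arc : rel 'I_4) : oriented arc -> skew_rank arc = 2%N -> pfI arc = 0.
Proof.
case=> irr anti hr.
have hdet : \det (skew_adj arc) = 0.
  have : skew_adj arc \notin unitmx.
    by apply/negP => /mxrank_unit; rewrite -/(skew_rank arc) hr.
  by rewrite unitmxE unitfE negbK => /eqP.
pose f (a b : nat) : rat := (sgI arc (ordn 3 a) (ordn 3 b))%:~R.
rewrite (@det4 _ _ f) in hdet; last first.
  move=> i j; rewrite /skew_adj mxE /f !ordn_val /sgI.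
  by case: (arc i j); case: (arc j i).
rewrite skew_D4 in hdet; last first.
- by move=> a; rewrite /f /sgI (negbTE (irr _)).
- move=> a b; rewrite /f /sgI.
  have := anti (ordn 3 a) (ordn 3 b).
  by case: (arc (ordn 3 a) _); case: (arc (ordn 3 b) _).
move/eqP: hdet; rewrite expf_eq0 /= => /eqP.
rewrite /f -!intrM -!intrB -intrD => /eqP.
by rewrite intr_eq0 => /eqP.
Qed.

Definition res4 (arc : rel 'I_4) : bool :=
  if (if isoB arc (@cycle_g 4) then evenB arc else false) then true else
  if isoB arc (@star_g 4) then true else
  if isoB arc (@k112_g 4) then evenB arc else false.
Definition chk4 (arc : rel 'I_4) := checkC arc (if pfI arc != 0 then true else res4 arc).
Definition chk3 (arc : rel 'I_3) := checkC arc (if isoB arc (@complete_g 3) then true else isoB arc (@path_g 3)).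
Definition chk2 (arc : rel 'I_2) := checkC arc (isoB arc (@path_g 2)).

Lemma all4L : let P := pairs 4%N in lall (fun c => chk4 (@arcOfL 4%N P c)) (codes (size P)).
Proof. by vm_compute. Qed.
Lemma all4 : lall (fun c => chk4 (@arcOf 4%N c)) (codes (size (pairs 4%N))).
Proof. exact: all4L. Qed.
Lemma all3 : lall (fun c => chk3 (@arcOf 3%N c)) (codes (size (pairs 3%N))).
Proof. by vm_compute. Qed.
Lemma all2 : lall (fun c => chk2 (@arcOf 2%N c)) (codes (size (pairs 2%N))).
Proof. by vm_compute. Qed.

Theorem theorem3p1 (n : nat) (arc : rel 'I_n) :
  oriented arc -> connected_og arc -> (2 <= n <= 4)%N -> skew_rank arc = 2%N ->
  (n = 2%N -> und_iso arc (@path_g n)) /\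
  (n = 3%N -> und_iso arc (@complete_g n) \/ und_iso arc (@path_g n)) /\
  (n = 4%N ->
     (und_iso arc (@cycle_g n) /\ evenly_oriented arc) \/
     und_iso arc (@star_g n) \/
     (und_iso arc (@k112_g n) /\ evenly_oriented arc)).
Proof.
move=> Ho Hc /andP [h2 h4] Hr.
case: n arc Ho Hc h2 h4 Hr => [|[|[|[|[|n]]]]] arc Ho Hc h2 h4 Hr //.
- split; [move=> _ | split => // _].
  have := all2; rewrite lallE => /allP /(_ _ (code_in arc)).
  rewrite -(arc_code Ho) /chk2 => /(checkCP Hc).
  exact: isoBP.
- split => //; split => // _.
  have := all3; rewrite lallE => /allP /(_ _ (code_in arc)).
  rewrite -(arc_code Ho) /chk3 => /(checkCP Hc).
  case: ifP => [/isoBP H _ | _ /isoBP H]; [left | right]; exact: H.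
- split => //; split => // _.
  have := all4; rewrite lallE => /allP /(_ _ (code_in arc)).
  rewrite -(arc_code Ho) /chk4 => /(checkCP Hc).
  rewrite (pf0 Ho Hr) eqxx /res4.
  case: ifP => [|_].
    by case: ifP => // /isoBP H1 /evenBP H2 _; left.
  case: ifP => [/isoBP H _ | _]; first by right; left.
  by case: ifP => // /isoBP H1 /evenBP H2; right; right.
Qed.
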